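(* Let $d\ge2$ and let $Q,Q'$ be qplexes. Then $Q$ and $Q'$ are isomorphic if and only if there is a type-preserving measurement for $Q$ whose stretched measurement matrix $R$ satisfies $Q'=RQ$.
   Context: Fix an integer $d\ge 2$. $\langle\cdot,\cdot\rangle$ is the standard inner product on $\mathbb{R}^{d^2}$, $\|\cdot\|$ the Euclidean norm. $\Delta=\{p\in\mathbb{R}^{d^2}: p(i)\ge0,\ \sum_ip(i)=1\}$; $H=\{u\in\mathbb{R}^{d^2}:\sum_i u(i)=1\}$; $c=(1/d^2,\dots,1/d^2)$. For $A\subseteq H$ the polar is $A^*=\{u\in H:\langle u,v\rangle\ge\frac{1}{d(d+1)}\ \forall v\in A\}$. Out-ball $B_{\rm o}=\{u\in H:\|u-c\|\le r_{\rm o}\}$, $r_{\rm o}^2=\frac{d-1}{d^2(d+1)}$. A qplex is a set $Q\subseteq\Delta\cap B_{\rm o}$ with $Q^*=Q$. Two qplexes $Q,Q'$ are isomorphic if there is a linear bijection $f:\mathbb{R}^{d^2}\to\mathbb{R}^{d^2}$ with $f(Q)=Q'$ and $\langle f(q_1),f(q_2)\rangle=\langle q_1,q_2\rangle$ for all $q_1,q_2\in Q$. A measurement (with $d^2$ outcomes) is an array of reals $r(i|j)\ge0$ with $\sum_i r(i|j)=1$ for every $j$. For $q\in Q$, $q_r(i)=\sum_j\big[(d+1)q(j)-\frac1d\big]r(i|j)$ and $Q_r=\{q_r:q\in Q\}$; the measurement is type-preserving for $Q$ if $Q_r$ is a qplex. Its stretched measurement matrix is $R_{ij}=(d+1)r(i|j)-\frac1d\sum_k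 r(i|k)$, so that $q_r=Rq$. *)

(* Defs.v *)
(* Scalars: an arbitrary real closed field R (the paper uses the reals). *)
From HB Require Import structures.
From mathcomp Require Import all_boot all_order all_algebra.
Set Implicit Arguments. Unset Strict Implicit. Unset Printing Implicit Defensive.
Import Order.TTheory GRing.Theory Num.Theory.
Local Open Scope ring_scope.

Section Qplex.
Variables (R : rcfType) (d : nat).

Definition vec := 'cV[R]_(d ^ 2).
Definition vset := vec -> Prop.

Definition dot (u v : vec) : R := \sum_(i < d ^ 2) u i 0 * v i 0.

Definition inH (u : vec) : Prop := \sum_(i < d ^ 2) u i 0 = 1.

Definition inDelta (p : vec) : Prop :=
  (forall i, 0 <= p i 0) /\ \sum_(i < d ^ 2) p i 0 = 1.

Definition cvec : vec := const_mx (1 / (d ^ 2)%:R).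

Definition ro2 : R := (d%:R - 1) / ((d ^ 2)%:R * (d%:R + 1)).

Definition inBo (u : vec) : Prop := inH u /\ dot (u - cvec) (u - cvec) <= ro2.

Definition polar (A : vset) : vset :=
  fun u => inH u /\ forall v, A v -> 1 / (d%:R * (d%:R + 1)) <= dot u v.

Definition qplex (Q : vset) : Prop :=
  (forall q, Q q -> inDelta q /\ inBo q) /\ (forall u, polar Q u <-> Q u).

Definition qimage (f : vec -> vec) (A : vset) : vset :=
  fun y => exists x, A x /\ f x = y.

Definition set_eq (A B : vset) : Prop := forall u, A u <-> B u.

Definition isomorphic (Q Q' : vset) : Prop :=
  exists f : vec -> vec,
    linear f /\ bijective f /\ set_eq (qimage f Q) Q' /\
    (forall q1 q2, Q q1 -> Q q2 -> dot (f q1) (f q2) = dot q1 q2).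

(* a measurement with d^2 outcomes: r i j = r(i|j) *)
Definition measurement (r : 'M[R]_(d ^ 2)) : Prop :=
  (forall i j, 0 <= r i j) /\ (forall j, \sum_(i < d ^ 2) r i j = 1).

Definition meas_apply (r : 'M[R]_(d ^ 2)) (q : vec) : vec :=
  \col_i \sum_(j < d ^ 2) ((d%:R + 1) * q j 0 - 1 / d%:R) * r i j.

Definition type_preserving (Q : vset) (r : 'M[R]_(d ^ 2)) : Prop :=
  qplex (qimage (meas_apply r) Q).

Definition stretched (r : 'M[R]_(d ^ 2)) : 'M[R]_(d ^ 2) :=
  \matrix_(i, j) ((d%:R + 1) * r i j - 1 / d%:R * \sum_(k < d ^ 2) r i k).

End Qplex.

(* Main.v *)
Require Import Defs.
From Stdlib Require Import IndefiniteDescription.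
From HB Require Import structures.
From mathcomp Require Import all_boot all_order all_algebra.
From mathcomp Require Import ring lra.
Import Order.TTheory GRing.Theory Num.Theory.
Local Open Scope ring_scope.
Set Implicit Arguments. Unset Strict Implicit. Unset Printing Implicit Defensive.

Definition Jm (R : rcfType) (d : nat) : 'M[R]_(d ^ 2) := const_mx 1.
Definition Bm (R : rcfType) (d : nat) : 'M[R]_(d ^ 2) :=
  (d%:R * (d%:R + 1))^-1 *: (d%:R *: 1%:M + Jm R d).
Definition Bi (R : rcfType) (d : nat) : 'M[R]_(d ^ 2) :=
  (d%:R + 1) *: 1%:M - d%:R^-1 *: Jm R d.

Lemma JJ (R : rcfType) (d : nat) : Jm R d *m Jm R d = (d%:R ^+ 2) *: Jm R d.
Proof.
apply/matrixP => i j; rewrite !mxE (eq_bigr (fun _ => 1)); last by move=> k _; rewrite !mxE mulr1.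
by rewrite sumr_const card_ord natrX mulr1.
Qed.

Lemma dnz (R : rcfType) (d : nat) : (2 <= d)%N -> (d%:R : R) != 0.
Proof. by move=> hd; rewrite pnatr_eq0 -lt0n; apply: leq_trans hd. Qed.

Lemma d1nz (R : rcfType) (d : nat) : (d%:R + 1 : R) != 0.
Proof. by rewrite natr1 pnatr_eq0. Qed.

Lemma BBi (R : rcfType) (d : nat) : (2 <= d)%N -> Bm R d *m Bi R d = 1%:M.
Proof.
move=> hd; have h1 := dnz R hd; have h2 := d1nz R d.
rewrite /Bm /Bi -scalemxAl mulmxDl !mulmxBr -!scalemxAl -!scalemxAr !mul1mx !mulmx1 JJ.
apply/matrixP => i j; rewrite !mxE.
case: (i == j) => /=; field; by rewrite h1 h2.
Qed.

Lemma BiB (R : rcfType) (d : nat) : (2 <= d)%N -> Bi R d *m Bm R d = 1%:M.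
Proof. by move=> hd; apply: mulmx1C; apply: BBi. Qed.

Lemma stretchedE (R : rcfType) (d : nat) (r : 'M[R]_(d ^ 2)) :
  stretched r = r *m Bi R d.
Proof.
rewrite /Bi mulmxBr -!scalemxAr mulmx1; apply/matrixP => i j; rewrite !mxE.
by rewrite div1r; congr (_ - _ * _); apply: eq_bigr => k _; rewrite mxE mulr1.
Qed.

Lemma BiBi (R : rcfType) (d : nat) : (2 <= d)%N ->
  Bi R d *m Bi R d = (d%:R + 1) ^+ 2 *: 1%:M - ((d%:R + 2) / d%:R) *: Jm R d.
Proof.
move=> hd; have h1 := dnz R hd.
rewrite /Bi mulmxBl !mulmxBr -!scalemxAl -!scalemxAr !mul1mx !mulmx1 JJ.
apply/matrixP => i j; rewrite !mxE.
case: (i == j) => /=; field; by rewrite h1.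
Qed.

Lemma JtrR (R : rcfType) (d : nat) : (Jm R d)^T = Jm R d.
Proof. by apply/matrixP => i j; rewrite !mxE. Qed.
Lemma BmT (R : rcfType) (d : nat) : (Bm R d)^T = Bm R d.
Proof. by apply/matrixP => i j; rewrite !mxE eq_sym. Qed.
Lemma BiT (R : rcfType) (d : nat) : (Bi R d)^T = Bi R d.
Proof. by apply/matrixP => i j; rewrite !mxE eq_sym. Qed.

Lemma dotE (R : rcfType) (d : nat) (u v : vec R d) : dot u v = (u^T *m v) 0 0.
Proof. by rewrite /dot mxE; apply: eq_bigr => i _; rewrite mxE. Qed.

Lemma mul_col_sum (R : rcfType) (n : nat) (A : 'M[R]_n) (w : 'cV[R]_n) :
  A *m w = \sum_j w j 0 *: col j A.
Proof.
apply/matrixP => i k; rewrite (ord1 k) mxE summxE; apply: eq_bigr => j _; rewrite !mxE mulrC.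
by [].
Qed.

Lemma lin_sum (R : rcfType) (n : nat) (f : 'cV[R]_n -> 'cV[R]_n) :
  linear f -> forall (I : Type) (s : seq I) (F : I -> 'cV[R]_n) (a : I -> R),
  f (\sum_(i <- s) a i *: F i) = \sum_(i <- s) a i *: f (F i).
Proof.
move=> Hf.
have f0 : f 0 = 0.
  have h := Hf 1 0 0; rewrite !scale1r addr0 in h.
  have := congr1 (fun x => x - f 0) h. rewrite /= addrK subrr. by move=> <-.
move=> I s F a; elim: s => [|x s IH]; first by rewrite !big_nil.
by rewrite !big_cons Hf IH.
Qed.

Lemma lin_mx (R : rcfType) (n : nat) (f : 'cV[R]_n -> 'cV[R]_n) (X : 'M[R]_n) :
  linear f -> forall w, f (X *m w) = (\matrix_(i, j) f (col j X) i 0) *m w.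
Proof.
move=> Hf w; rewrite !mul_col_sum lin_sum //; apply: eq_bigr => j _; congr (_ *: _).
by apply/matrixP => i k; rewrite (ord1 k) !mxE.
Qed.

Lemma qplex_ext (R : rcfType) (d : nat) (A B : vset R d) :
  set_eq A B -> qplex A -> qplex B.
Proof.
move=> hAB [h1 h2]; split.
  by move=> q /hAB/h1.
move=> u; split.
  move=> [hu hp]; apply/hAB/h2; split => // v /hAB; exact: hp.
move=> /hAB/h2 [hu hp]; split => // v /hAB; exact: hp.
Qed.

Lemma meas_applyE (R : rcfType) (d : nat) (r : 'M[R]_(d ^ 2)) (q : vec R d) :
  inH q -> meas_apply r q = r *m (Bi R d *m q).
Proof.
move=> hq; rewrite /Bi mulmxBl -!scalemxAl mul1mx.
apply/matrixP => i k; rewrite (ord1 k) !mxE; apply: eq_bigr => j _.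
rewrite mulrC !mxE; congr (_ * _).
congr (_ - _); rewrite div1r -[LHS]mulr1; congr (_ * _).
rewrite -hq /inH; apply: eq_bigr => l _; rewrite !mxE mul1r //.
Qed.

Lemma colBm_dot (R : rcfType) (d : nat) (j : 'I_(d ^ 2)) (v : vec R d) :
  \sum_i (col j (Bm R d)) i 0 * v i 0 =
  (d%:R * (d%:R + 1))^-1 * (d%:R * v j 0 + \sum_i v i 0).
Proof.
rewrite /Bm. under eq_bigr do rewrite !mxE.
under eq_bigr do rewrite -mulrA; rewrite -mulr_sumr; congr (_ * _).
under eq_bigr do rewrite mulrDl mul1r; rewrite big_split /=; congr (_ + _).
rewrite (bigD1 j) //= big1 ?addr0; first by rewrite eqxx mulr1.
by move=> i /negbTE ->; rewrite mulr0 mul0r.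
Qed.

Lemma basis_in (R : rcfType) (d : nat) (Q : vset R d) :
  (2 <= d)%N -> qplex Q -> forall j, Q (col j (Bm R d)).
Proof.
move=> hd [hQ hP] j; have h1 := dnz R hd; have h2 := d1nz R d.
apply/hP; split.
  rewrite /inH (eq_bigr (fun i => (col j (Bm R d)) i 0 * (const_mx 1 : vec R d) i 0)); last first.
    by move=> i _; rewrite [const_mx _ _ _]mxE mulr1.
  rewrite colBm_dot mxE (eq_bigr (fun _ => 1)); last by move=> i _; rewrite mxE.
  rewrite sumr_const card_ord natrX; field; by rewrite h1 h2.
move=> v Qv; rewrite /dot colBm_dot.
have [[hpos hsum] _] := hQ v Qv; rewrite hsum.
have -> : (d%:R * (d%:R + 1))^-1 * (d%:R * v j 0 + 1) =
   1 / (d%:R * (d%:R + 1)) + v j 0 / (d%:R + 1) by field; rewrite h1 h2.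
by rewrite lerDl divr_ge0 // addr_ge0 // ler0n.
Qed.

Lemma sq_sum (R : rcfType) (n : nat) (x : 'I_n -> R) (a b : R) :
  \sum_i (a * x i + b) * (a * x i + b) =
  a ^+ 2 * \sum_i x i * x i + 2 * a * b * \sum_i x i + n%:R * b ^+ 2.
Proof.
rewrite (eq_bigr (fun i => a ^+ 2 * (x i * x i) + (2 * a * b) * x i + b ^+ 2)); last first.
  by move=> i _; ring.
rewrite !big_split /= -!mulr_sumr sumr_const card_ord. by rewrite -mulr_natl; ring.
Qed.

Lemma norm_bound (R : rcfType) (d : nat) (Q : vset R d) (q : vec R d) :
  (2 <= d)%N -> qplex Q -> Q q -> dot (Bi R d *m q) (Bi R d *m q) <= 1.
Proof.
move=> hd [hQ _] Qq; have h1 := dnz R hd; have h2 := d1nz R d.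
have [[_ hsum] [_ hbo]] := hQ q Qq.
have e1 : dot (q - cvec R d) (q - cvec R d) =
   1 ^+ 2 * \sum_i q i 0 * q i 0 + 2 * 1 * (- (1 / (d ^ 2)%:R)) * \sum_i q i 0
   + (d ^ 2)%:R * (- (1 / (d ^ 2)%:R)) ^+ 2.
  rewrite -sq_sum; apply: eq_bigr => i _; by rewrite !mxE !mul1r.
have e2 : dot (Bi R d *m q) (Bi R d *m q) =
   (d%:R + 1) ^+ 2 * \sum_i q i 0 * q i 0 + 2 * (d%:R + 1) * (- d%:R^-1) * \sum_i q i 0
   + (d ^ 2)%:R * (- d%:R^-1) ^+ 2.
  rewrite -sq_sum; apply: eq_bigr => k _.
  rewrite /Bi mulmxBl -!scalemxAl mul1mx !mxE.
  rewrite (eq_bigr (fun l => q l 0)); last by move=> l _; rewrite !mxE mul1r.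
  by rewrite hsum mulr1.
rewrite e1 hsum /ro2 in hbo; rewrite e2 hsum.
move: hbo; set s := \sum_i _; rewrite natrX => hbo.
have hs : s <= 2 / (d%:R * (d%:R + 1)).
  have -> : (2 : R) / (d%:R * (d%:R + 1)) = (d%:R - 1) / (d%:R ^+ 2 * (d%:R + 1)) + 1 / d%:R ^+ 2.
    by field; rewrite h1 h2.
  rewrite -lerBlDr; apply: le_trans hbo; rewrite le_eqVlt; apply/orP; left; apply/eqP.
  field; by rewrite h1.
have -> : (d%:R + 1) ^+ 2 * s + (2 : R) * (d%:R + 1) * - d%:R^-1 * 1 + d%:R ^+ 2 * (- d%:R^-1) ^+ 2
   = 1 + (d%:R + 1) ^+ 2 * (s - 2 / (d%:R * (d%:R + 1))).
  by field; rewrite h1 h2.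
rewrite gerDl pmulr_rle0 ?subr_le0 //.
by rewrite exprn_gt0 // natr1 ltr0n.
Qed.

Lemma orth_of_frob (R : rcfType) (n : nat) (T U : 'M[R]_n) :
  T *m U = 1%:M -> \sum_j \sum_i T i j ^+ 2 <= n%:R ->
  \sum_j \sum_i U i j ^+ 2 <= n%:R -> T^T *m T = 1%:M.
Proof.
move=> hTU hT hU.
have e : \sum_i \sum_j (T i j - U j i) ^+ 2 =
   \sum_j \sum_i T i j ^+ 2 + \sum_j \sum_i U i j ^+ 2 - 2 * n%:R.
  have -> : n%:R = \sum_i \sum_j T i j * U j i :> R.
    rewrite (eq_bigr (fun i => (T *m U) i i)); last by move=> i _; rewrite mxE.
    rewrite hTU (eq_bigr (fun => 1)); last by move=> i _; rewrite mxE eqxx.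
    by rewrite sumr_const card_ord.
  rewrite [X in _ = X + _ - _]exchange_big /=.
  rewrite mulr_sumr -big_split /= -sumrB; apply: eq_bigr => i _.
  rewrite mulr_sumr -big_split /= -sumrB; apply: eq_bigr => j _.
  ring.
have hz : \sum_i \sum_j (T i j - U j i) ^+ 2 = 0.
  apply/eqP; rewrite eq_le; apply/andP; split.
    rewrite e subr_le0; apply: le_trans (lerD hT hU) _; rewrite mulr2n mulrDl mul1r //.
  by apply: sumr_ge0 => i _; apply: sumr_ge0 => j _; apply: sqr_ge0.
have hTU' : T = U^T.
  apply/matrixP => i j; rewrite mxE.
  move/eqP: hz; rewrite psumr_eq0 => [|k _]; last by apply: sumr_ge0 => l _; apply: sqr_ge0.
  move=> /allP /(_ i (mem_index_enum _)) /implyP /(_ isT).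
  rewrite psumr_eq0 => [|k _]; last by apply: sqr_ge0.
  move=> /allP /(_ j (mem_index_enum _)) /implyP /(_ isT).
  by rewrite sqrf_eq0 subr_eq0 => /eqP.
by rewrite {1}hTU' trmxK; apply: mulmx1C.
Qed.

Lemma colM (R : rcfType) (n : nat) (A B : 'M[R]_n) (j : 'I_n) :
  col j (A *m B) = A *m col j B.
Proof. by apply/matrixP => i k; rewrite !mxE; apply: eq_bigr => l _; rewrite !mxE. Qed.

Lemma colsq (R : rcfType) (d : nat) (T : 'M[R]_(d ^ 2)) (j : 'I_(d ^ 2)) :
  \sum_i T i j ^+ 2 = dot (col j T : vec R d) (col j T).
Proof. by rewrite /dot; apply: eq_bigr => i _; rewrite !mxE expr2. Qed.

Lemma frob_le (R : rcfType) (d : nat) (Q : vset R d) (X : 'M[R]_(d ^ 2)) :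
  (2 <= d)%N -> qplex Q -> (forall j, Q (col j X)) ->
  \sum_j \sum_i (Bi R d *m X) i j ^+ 2 <= (d ^ 2)%:R.
Proof.
move=> hd hQ hX.
rewrite -[X in _ <= X%:R]card_ord -sumr_const.
apply: ler_sum => j _; rewrite colsq colM; exact: norm_bound hd hQ (hX j).
Qed.

Theorem mainTheorem12 (R : rcfType) (d : nat) (hd : (2 <= d)%N)
  (Q Q' : vset R d) :
  qplex Q -> qplex Q' ->
  (isomorphic Q Q' <->
   exists r : 'M[R]_(d ^ 2),
     measurement r /\ type_preserving Q r /\
     set_eq Q' (qimage (fun q : vec R d => stretched r *m q) Q)).
Proof.
move=> hQ hQ'; have h1 := dnz R hd; have h2 := d1nz R d.
split.
  case=> f [hlin [_ [hset _]]].
  pose r : 'M[R]_(d ^ 2) := \matrix_(i, j) f (col j (Bm R d)) i 0.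
  have hf : forall q, f q = stretched r *m q.
    move=> q; rewrite stretchedE -mulmxA -lin_mx // mulmxA BBi // mul1mx //.
  have hfQ : forall j, Q' (f (col j (Bm R d))).
    move=> j; apply/hset; exists (col j (Bm R d)); split => //; exact: basis_in.
  exists r; split.
    split.
      move=> i j; rewrite mxE; have [[h _] _] := hQ'.1 _ (hfQ j); exact: h.
    move=> j; under eq_bigr do rewrite mxE; have [[_ h] _] := hQ'.1 _ (hfQ j); exact: h.
  have key : forall x, Q x -> meas_apply r x = f x.
    move=> x Qx; have [[_ hx] _] := hQ.1 _ Qx.
    by rewrite meas_applyE // hf stretchedE mulmxA.
  split.
    apply: (qplex_ext _ hQ') => u; split.
      by move=> /hset [x [Qx <-]]; exists x; split => //; rewrite key.
    by move=> [x [Qx <-]]; apply/hset; exists x; split => //; rewrite key.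
  move=> u; split.
    by move=> /hset [x [Qx <-]]; exists x; split => //; rewrite hf.
  by move=> [x [Qx <-]]; apply/hset; exists x; split => //; rewrite hf.
case=> r [[hr0 hr1] [_ hset]].
set Rm := stretched r.
have hRm : Rm = r *m Bi R d by rewrite /Rm stretchedE.
have hJr : Jm R d *m r = Jm R d.
  apply/matrixP => i j; rewrite !mxE -(hr1 j); apply: eq_bigr => k _; rewrite mxE mul1r //.
have hJR : Jm R d *m Rm = Jm R d.
  rewrite hRm mulmxA hJr /Bi mulmxBr -!scalemxAr mulmx1 JJ.
  apply/matrixP => i j; rewrite !mxE; field; by rewrite h1.
have hRB : Rm *m Bm R d = r by rewrite hRm -mulmxA BiB // mulmx1.
have hcol : forall j, Q' (col j r).
  move=> j; apply/hset; exists (col j (Bm R d)); split; first exact: basis_in.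
  by rewrite -colM hRB.
have hpre : forall i, exists p, Q p /\ Rm *m p = col i (Bm R d).
  move=> i; have := basis_in hd hQ' i; move=> /hset [p [Qp hp]]; by exists p.
pose pf i := proj1_sig (constructive_indefinite_description _ (hpre i)).
have pfP : forall i, Q (pf i) /\ Rm *m pf i = col i (Bm R d).
  move=> i; exact: (proj2_sig (constructive_indefinite_description _ (hpre i))).
pose P : 'M[R]_(d ^ 2) := \matrix_(k, i) pf i k 0.
have hPcol : forall i, col i P = pf i.
  by move=> i; apply/matrixP => k l; rewrite (ord1 l) !mxE.
have hRP : Rm *m P = Bm R d.
  apply/matrixP => k i.
  have := congr1 (fun M : 'cV[R]_(d ^ 2) => M k 0) (proj2 (pfP i)).
  by rewrite /= -hPcol -colM !mxE.
pose T := Bi R d *m r; pose U := Bi R d *m P.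
have hTU : T *m U = 1%:M.
  by rewrite /T /U -hRB !mulmxA -(mulmxA _ (Bm R d) (Bi R d)) BBi // mulmx1 -(mulmxA _ Rm) hRP BiB.
have hT : \sum_j \sum_i T i j ^+ 2 <= (d ^ 2)%:R by apply: frob_le hd hQ' hcol.
have hU : \sum_j \sum_i U i j ^+ 2 <= (d ^ 2)%:R.
  by apply: frob_le hd hQ _ => j; rewrite hPcol; exact: (pfP j).1.
have hTT := orth_of_frob hTU hT hU.
have hX : Rm^T *m (Bi R d *m Bi R d) *m Rm = Bi R d *m Bi R d.
  have e : T^T *m T = Bm R d *m (Rm^T *m (Bi R d *m Bi R d) *m Rm) *m Bm R d.
    by rewrite /T -hRB !trmx_mul BmT BiT !mulmxA.
  rewrite e in hTT.
  have := congr1 (fun M => Bi R d *m M *m Bi R d) hTT.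
  by rewrite /= mulmx1 !mulmxA BiB // mul1mx -!mulmxA BBi // mulmx1.
have hRtJ : Rm^T *m Jm R d = Jm R d.
  by rewrite -{1}JtrR -trmx_mul hJR JtrR.
have hRtR : Rm^T *m Rm = 1%:M.
  move: hX; rewrite BiBi // mulmxBr mulmxBl -!scalemxAr -!scalemxAl mulmx1 hRtJ hJR.
  move=> /addIr /scalerI; apply; rewrite expf_neq0 //.
exists (mulmx Rm); split.
  by move=> a u v; rewrite mulmxDr scalemxAr.
split.
  exists (mulmx Rm^T) => u; first by rewrite mulmxA hRtR mul1mx.
  by rewrite mulmxA (mulmx1C hRtR) mul1mx.
split.
  by move=> u; split; move/hset.
move=> q1 q2 _ _; rewrite !dotE trmx_mul !mulmxA -(mulmxA _ Rm^T) hRtR mulmx1 //.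
Qed.
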